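(* Let $c\ge 1$ be an integer. The $c$-indistinguishable finite bias distributions are in one-to-one correspondence with the symmetric quadrature systems of degree $c-1$, via the following mutually inverse maps. (i) For a symmetric quadrature system $\mathcal{Q}=(X,\omega)$ of degree $c-1$, let $\mathcal{P}(\mathcal{Q})$ be the distribution that takes the value $\frac{1+\xi}{2}$ with probability $\frac{\omega(\xi)}{C\sqrt{1-\xi^2}}$ for each $\xi\in X$, where $C=\sum_{\xi\in X}\omega(\xi)/\sqrt{1-\xi^2}$. (ii) For a $c$-indistinguishable finite bias distribution $\mathcal{P}$ taking the values $p_1,\dots,p_k$ with probabilities $q_1,\dots,q_k$ respectively, let $\mathcal{Q}(\mathcal{P})=(\{\xi_1,\dots,\xi_k\},\omega)$ with $\xi_i=2p_i-1$ and $\omega(\xi_i)=\sqrt{p_i(1-p_i)}\,q_i/C'$, where $C'=\sum_{i=1}^k\sqrt{p_i(1-p_i)}\,q_i/2$. Then $\mathcal{P}(\mathcal{Q})$ is a $c$-indistinguishable finite bias distribution, $\mathcal{Q}(\mathcal{P})$ is a symmetric quadrature system of degree $c-1$, $\mathcal{Q}(\mathcal{P}(\mathcal{Q}))=\mathcal{Q}$ and $\mathcal{P}(\mathcal{Q}(\mathcal{P}))=\mathcal{P}$.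
   Context: A finite bias distribution is a probability distribution $\mathcal{P}$ supported on a finite subset of the open interval $(0,1)$ that is symmetric: for every $a$, $\mathcal{P}$ outputs $a$ and $1-a$ with the same probability. $E_p$ denotes expectation over $p$ drawn from $\mathcal{P}$. For $0<p<1$ put $\sigma(p)=\sqrt{(1-p)/p}$, and for integers $\ell\ge 1$, $0\le x\le\ell$ put $f_{\ell,x}(p)=p^x(1-p)^{\ell-x}\bigl(x\sigma(p)-(\ell-x)\sigma(1-p)\bigr)$ and $R_{\ell,x}=\max\{0,E_p[f_{\ell,x}(p)]\}$. For a positive integer $c$, $\mathcal{P}$ is called $c$-indistinguishable if $\sum_{x=1}^{\ell-1}\binom{\ell}{x}R_{\ell,x}=0$ for all $2\le\ell\le c$. A quadrature system (QS) of degree $d$ is a pair $(X,\omega)$ where $X$ is a finite subset of $(-1,1)$ and $\omega:X\to(0,\infty)$, such that $\int_{-1}^1F(t)\,dt=\sum_{\xi\in X}\omega(\xi)F(\xi)$ for every real polynomial $F$ of degree at most $d$. Its order is $|X|$. It is symmetric if $-X=X$ and $\omega(-\xi)=\omega(\xi)$ for all $\xi\in X$. *)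

(* Defs.v *)
From HB Require Import structures.
From mathcomp Require Import all_boot all_order all_algebra.
From mathcomp Require Import all_classical all_reals all_analysis.
Set Implicit Arguments. Unset Strict Implicit. Unset Printing Implicit Defensive.
Import Order.TTheory GRing.Theory Num.Theory.
Local Open Scope classical_set_scope.
Local Open Scope ring_scope.

Section Defs.
Variable R : realType.

Definition supp (w : R -> R) : set R := [set x | w x != 0].

(* Finite bias distribution, encoded by its probability mass function P:
   P x is the probability of outputting x (0 outside the support). *)
Definition bias_dist (P : R -> R) : Prop :=
  finite_set (supp P) /\
  (forall x, 0 <= P x) /\
  (forall x, P x != 0 -> 0 < x < 1) /\
  (\sum_(x \in supp P) P x = 1) /\
  (forall a, P (1 - a) = P a).

Definition Ep (P : R -> R) (f : R -> R) : R := \sum_(x \in supp P) P x * f x.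

Definition sigma (p : R) : R := Num.sqrt ((1 - p) / p).

Definition fbias (l x : nat) (p : R) : R :=
  p ^+ x * (1 - p) ^+ (l - x) *
  (x%:R * sigma p - (l - x)%:R * sigma (1 - p)).

Definition Rlx (P : R -> R) (l x : nat) : R := Num.max 0 (Ep P (fbias l x)).

Definition c_indist (c : nat) (P : R -> R) : Prop :=
  bias_dist P /\
  forall l : nat, (2 <= l <= c)%N ->
    \sum_(1 <= x < l) ('C(l, x))%:R * Rlx P l x = 0.

(* Quadrature system encoded by its weight function omega : R -> R, with
   node set X = supp omega (omega is 0 outside X, positive on X). *)
Definition QS (d : nat) (w : R -> R) : Prop :=
  finite_set (supp w) /\
  (forall x, 0 <= w x) /\
  (forall x, w x != 0 -> -1 < x < 1) /\
  (forall F : {poly R}, (size F <= d.+1)%N ->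
     (\int[lebesgue_measure]_(t in `[(-1)%R, 1%R]) (F.[t])%:E)%E =
     (\sum_(xi \in supp w) w xi * F.[xi])%:E).

Definition symQS (d : nat) (w : R -> R) : Prop :=
  QS d w /\ forall xi, w (- xi) = w xi.

Definition PofQ (w : R -> R) : R -> R :=
  let C := \sum_(xi \in supp w) w xi / Num.sqrt (1 - xi ^+ 2) in
  fun p => let xi := 2 * p - 1 in w xi / (C * Num.sqrt (1 - xi ^+ 2)).

Definition QofP (P : R -> R) : R -> R :=
  let C' := \sum_(p \in supp P) Num.sqrt (p * (1 - p)) * P p / 2 in
  fun xi => let p := (1 + xi) / 2 in Num.sqrt (p * (1 - p)) * P p / C'.

End Defs.

(* Main.v *)
Require Import Defs.
From HB Require Import structures.
From mathcomp Require Import all_boot all_order all_algebra.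
From mathcomp Require Import all_classical all_reals all_analysis.
From mathcomp Require Import ring lra.
Import Order.TTheory GRing.Theory Num.Theory.
Import numFieldNormedType.Exports.
Local Open Scope ring_scope.
Set Implicit Arguments. Unset Strict Implicit.

Section Poly.
Variable R : realType.
Implicit Types (G K F A : {poly R}).

Definition Uf G : R := \sum_(i < size G) G`_i / i.+1%:R.

Lemma Uf_wide {n G} : (size G <= n)%N -> Uf G = \sum_(i < n) G`_i / i.+1%:R.
Proof.
move=> H; rewrite /Uf -(subnKC H) big_split_ord /= [X in _ + X]big1 ?addr0 //.
by move=> i _; rewrite nth_default ?mul0r // leq_addr.
Qed.

Definition prim G : {poly R} :=
  \poly_(i < (size G).+1) (if i is j.+1 then G`_j / j.+1%:R else 0).

Lemma prim_deriv G : (prim G)^`() = G.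
Proof.
apply/polyP => i; rewrite coef_deriv coef_poly ltnS.
case: ltnP => H; last by rewrite mul0rn nth_default.
by rewrite -[_ *+ i.+1]mulr_natr divfK // pnatr_eq0.
Qed.

Lemma prim_U G : (prim G).[1] - (prim G).[0] = Uf G.
Proof.
rewrite horner_coef0 (horner_coef_wide _ (size_poly _ _)) big_ord_recl.
rewrite coef_poly /= mul0r add0r subr0 /Uf; apply: eq_bigr => i _.
by rewrite coef_poly /= ltnS ltn_ord expr1n mulr1.
Qed.

Lemma size_deriv_le K : (size K^`() <= size K)%N.
Proof.
have [->|K0] := eqVneq K 0; first by rewrite deriv0.
exact/ltnW/lt_size_deriv.
Qed.

Lemma Uf_deriv K : Uf (K^`()) = K.[1] - K.[0].
Proof.
rewrite (Uf_wide (size_deriv_le K)) horner_coef0.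
rewrite (horner_coef_wide _ (leqnSn (size K))) big_ord_recl /= expr0 mulr1 addrAC subrr add0r.
apply: eq_bigr => i _; rewrite coef_deriv expr1n mulr1 -[_ *+ i.+1]mulr_natr mulfK //.
Qed.

Definition qp : {poly R} := 2^-1 *: ('X - (-1)%:P).
Definition rp : {poly R} := 2 *: ('X - (2^-1)%:P).

Lemma qpE x : qp.[x] = (1 + x) / 2.
Proof. rewrite /qp hornerZ hornerXsubC; by field. Qed.

Lemma rpE x : rp.[x] = 2 * x - 1.
Proof. rewrite /rp hornerZ hornerXsubC; by field. Qed.

Lemma size_qp : size qp = 2%N.
Proof. by rewrite /qp size_scale ?size_XsubC // invr_eq0 pnatr_eq0. Qed.

Lemma size_rp : size rp = 2%N.
Proof. by rewrite /rp size_scale ?size_XsubC // pnatr_eq0. Qed.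

Lemma rp_qp : rp \Po qp = 'X.
Proof.
rewrite /rp /qp linearZ /= comp_polyB comp_polyX comp_polyC.
apply/polyP => i; rewrite !(coefZ, coefB, coefD, coefX, coefC, coefN).
by case: i => [|[|i]] /=; field.
Qed.

Lemma qp_rp : qp \Po rp = 'X.
Proof.
rewrite /rp /qp linearZ /= comp_polyB comp_polyX comp_polyC.
apply/polyP => i; rewrite !(coefZ, coefB, coefD, coefX, coefC, coefN).
by case: i => [|[|i]] /=; field.
Qed.

Definition Iq F := (\int[lebesgue_measure]_(t in `[(-1)%R, 1%R]) (F.[t])%:E)%E.

Lemma ftc_poly (D : {poly R}) : Iq (D^`()) = (D.[1] - D.[-1])%:E.
Proof.
rewrite /Iq (@continuous_FTC2 _ _ (horner D)) ?EFinB //.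
- apply: continuous_subspaceT => x; exact: continuous_horner.
- split.
  + by move=> x _; exact: derivable_horner.
  + by apply: cvg_at_right_filter; exact: continuous_horner.
  + by apply: cvg_at_left_filter; exact: continuous_horner.
- by move=> x _; rewrite -derivE.
Qed.

Lemma bridge G : Iq (G \Po qp) = (2 * Uf G)%:E.
Proof.
have dq : qp^`() = (2^-1)%:P.
  by rewrite /qp derivZ derivXsubC alg_polyC.
have -> : G \Po qp = (2 *: (prim G \Po qp))^`().
  rewrite derivZ deriv_comp prim_deriv dq mulrC mul_polyC scalerA mulfV ?scale1r //.
rewrite ftc_poly !hornerZ !horner_comp !qpE -prim_U.
congr (_%:E); rewrite -mulrBr; congr (_ * (_ - _)); congr (_.[_]); by field.
Qed.

Lemma I_U F : Iq F = (2 * Uf (F \Po rp))%:E.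
Proof. by rewrite -bridge -comp_polyA rp_qp comp_polyXr. Qed.

Lemma size_comp_rp F : size (F \Po rp) = size F.
Proof. exact: size_comp_poly2 size_rp. Qed.
Lemma size_comp_qp F : size (F \Po qp) = size F.
Proof. exact: size_comp_poly2 size_qp. Qed.

End Poly.
Arguments qp {R}. Arguments rp {R}.


Section Bern.
Variable R : realType.

Definition Bp (l x : nat) : {poly R} := 'X^x * (1 - 'X) ^+ (l - x).

Lemma sqrt_div (a b : R) : 0 < b -> Num.sqrt (a / b) = Num.sqrt (a * b) / b.
Proof.
move=> b0.
have -> : a / b = (a * b) * (b^-1) ^+ 2 by rewrite expr2; field; rewrite gt_eqF.
rewrite sqrtrM ?sqrtr_sqr ?ger0_norm ?invr_ge0 ?ltW //.
Abort.

Lemma sqrt_div (a b : R) : 0 < b -> Num.sqrt (a / b) = Num.sqrt (a * b) / b.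
Proof.
move=> b0.
have -> : a / b = (b^-1) ^+ 2 * (a * b) by rewrite expr2; field; rewrite gt_eqF.
rewrite sqrtrM ?sqrtr_sqr ?ger0_norm ?invr_ge0 ?ltW ?exprn_gt0 ?invr_gt0 //; by rewrite mulrC.
Qed.

Lemma fbiasE (l x : nat) (p : R) : 0 < p < 1 -> (x <= l)%N ->
  fbias l x p = Num.sqrt (p * (1 - p)) * ((Bp l x)^`()).[p].
Proof.
move=> /andP[p0 p1] xl.
have q0 : 0 < 1 - p by rewrite subr_gt0.
rewrite /fbias /sigma /Bp derivM derivXn deriv_exp derivB derivX derivC.
have -> : 1 - (1 - p) = p by ring.
rewrite sqrt_div // sqrt_div // [(1 - p) * p]mulrC.
rewrite !(hornerMn, hornerM, hornerXn, hornerN, hornerD, hornerC, hornerX, hornerE).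
set s := Num.sqrt _; set m := (l - x)%N.
case: x {xl} m => [|x] [|m] /=; rewrite ?expr0 ?exprS ?mulr0n ?mulr1n; try by field; rewrite ?gt_eqF.
Qed.


Lemma size_deriv_leq (D : {poly R}) : (size D^`() <= (size D).-1)%N.
Proof. exact: size_poly. Qed.

Lemma size_Bp {l x} : (x <= l)%N -> (size (Bp l x) <= l.+1)%N.
Proof.
move=> xl; rewrite /Bp (leq_trans (size_polyMleq _ _)) //.
rewrite size_polyXn /=.
have h1 : (size (1 - 'X : {poly R})%R <= 2)%N.
  by rewrite -opprB size_opp -polyC1 size_XsubC.
have := size_poly_exp_leq (1 - 'X : {poly R})%R (l - x).
move=> h2; apply: (leq_trans (leq_add (leqnn _) h2)).
have h3 : ((size (1 - 'X : {poly R})%R).-1 <= 1)%N by rewrite -subn1 leq_subLR.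
rewrite addnS ltnS -[X in (_ <= X)%N](subnKC xl) leq_add2l.
by rewrite (leq_trans (leq_mul h3 (leqnn _))) // mul1n.
Qed.

Lemma size_dBp l x : (x <= l)%N -> (size (Bp l x)^`() <= l)%N.
Proof.
move=> xl; apply: (leq_trans (size_deriv_leq _)).
have := size_Bp xl; case: (size (Bp l x)) => //.
Qed.

Lemma Bp_end l x : (0 < x < l)%N -> (Bp l x).[1] = 0 /\ (Bp l x).[0] = 0.
Proof.
move=> /andP[x0 xl]; rewrite /Bp !hornerE subrr subr0 !expr0n.
by rewrite subn_eq0 leqNgt xl gtn_eqF // !mulr0 mul0r.

Qed.

Lemma dBp_special (a : nat) (p : R) :
  ((Bp a.+2 a.+1)^`()).[p] = a.+1%:R * p ^+ a - a.+2%:R * p ^+ a.+1.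
Proof.
rewrite /Bp subSS subSn // subnn expr1 derivM derivXn derivB derivX derivC.
rewrite !(hornerMn, hornerM, hornerXn, hornerN, hornerD, hornerC, hornerX, hornerE) /=.
rewrite -mulr_natl [a.+2%:R]mulrSr exprS; ring.
Qed.

Lemma fbias_sym l x (p : R) : (x <= l)%N ->
  fbias l (l - x) (1 - p) = - fbias l x p.
Proof.
move=> xl; rewrite /fbias subKn // (_ : 1 - (1 - p) = p); last by ring.
ring.
Qed.

End Bern.
Arguments Bp {R}.

Local Open Scope classical_set_scope.
Local Open Scope ring_scope.

Section Gen.
Variable R : realType.

Lemma supp_image (u v h hinv : R -> R) : cancel h hinv -> cancel hinv h ->
  (forall x, (v (h x) != 0) = (u x != 0)) -> supp v = h @` supp u.
Proof.
move=> hK hinvK huv; apply/seteqP; split => y.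
  rewrite /supp /= => vy; exists (hinv y); last by rewrite hinvK.
  by rewrite /= -huv hinvK.
by case=> x; rewrite /supp /= => ux <-; rewrite huv.
Qed.

Lemma sum_image (A : set R) (h hinv : R -> R) (F : R -> R) : cancel h hinv ->
  \sum_(y \in h @` A) F y = \sum_(x \in A) F (h x).
Proof.
move=> hK; apply: fsbig_image => x y _ _; exact: (can_inj hK).
Qed.

Lemma sum_pos (A : set R) (F : R -> R) : finite_set A ->
  (forall x, A x -> 0 <= F x) -> (exists2 x, A x & 0 < F x) ->
  0 < \sum_(x \in A) F x.
Proof.
move=> fA F0 [x Ax Fx]; rewrite (fsbigD1 x) //.
apply: (lt_le_trans Fx); rewrite lerDl fsumr_ge0 // => y [Ay _]; exact: F0.
Qed.

Lemma sqrt_quarter (y : R) : Num.sqrt (y / 4) = Num.sqrt y / 2.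
Proof.
have -> : y / 4 = (2^-1) ^+ 2 * y by rewrite expr2; field.
rewrite sqrtrM ?sqrtr_sqr ?ger0_norm ?invr_ge0 ?exprn_ge0 ?invr_ge0 ?ler0n //.
by rewrite mulrC.
Qed.

Lemma sqrt_four (y : R) : Num.sqrt (4 * y) = 2 * Num.sqrt y.
Proof.
have -> : 4 * y = 2 ^+ 2 * y by rewrite expr2; field.
by rewrite sqrtrM ?sqrtr_sqr ?ger0_norm ?exprn_ge0 ?ler0n.
Qed.

Lemma one_sub_sqr_gt0 (x : R) : -1 < x < 1 -> 0 < 1 - x ^+ 2.
Proof. move=> /andP[h1 h2]; rewrite expr2; nra. Qed.

End Gen.


Unset Implicit Arguments.
Section Dir1.
Variables (R : realType) (c : nat) (hc : (1 <= c)%N) (w : R -> R).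
Hypothesis hw : symQS c.-1 w.

Let fin : finite_set (supp w). Proof. by case: hw => [[h _] _]. Qed.
Let w0 x : 0 <= w x. Proof. by case: hw => [[_ [h _]] _]. Qed.
Let wr x : w x != 0 -> -1 < x < 1. Proof. by case: hw => [[_ [_ [h _]]] _]; apply: h. Qed.
Let wsym x : w (- x) = w x. Proof. by case: hw => _ h. Qed.
Let quad (F : {poly R}) : (size F <= c)%N ->
  \sum_(xi \in supp w) w xi * F.[xi] = 2 * Uf (F \Po rp).
Proof.
move=> hF; case: hw => [[_ [_ [_ q]]] _].
have := q F; rewrite prednK // => /(_ hF).
by move=> h; apply: EFin_inj; rewrite -h -I_U.
Qed.

Let sumw : \sum_(xi \in supp w) w xi = 2.
Proof.
have := @quad 1; rewrite size_poly1 => /(_ hc).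
rewrite -polyC1 comp_polyC /Uf size_polyC oner_neq0 big_ord1 coefC /= divr1 mulr1.
by under eq_fsbigr do rewrite hornerC mulr1.
Qed.

Let C := \sum_(xi \in supp w) w xi / Num.sqrt (1 - xi ^+ 2).

Let Cpos : 0 < C.
Proof.
have [xi hxi wxi] : exists2 xi, supp w xi & w xi != 0.
  case: (pselect (exists2 xi, supp w xi & w xi != 0)) => // H.
  exfalso; move: sumw; rewrite fsbig1 => [/eqP|x hx]; first by rewrite eq_sym pnatr_eq0.
  by exfalso; apply: H; exists x.
apply: sum_pos => //.
  by move=> x _; rewrite divr_ge0 ?sqrtr_ge0.
exists xi => //; rewrite divr_gt0 //; first by rewrite lt_neqAle eq_sym wxi w0.
by rewrite sqrtr_gt0 one_sub_sqr_gt0 // wr.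
Qed.


Let C0 : C != 0. Proof. by rewrite gt_eqF. Qed.

Let sq_ne0 x : w x != 0 -> Num.sqrt (1 - x ^+ 2) != 0.
Proof. by move=> /wr h; rewrite gt_eqF // sqrtr_gt0 one_sub_sqr_gt0. Qed.

Let P := PofQ w.
Let hq (x : R) := (1 + x) / 2.
Let hi (p : R) := 2 * p - 1.
Let hqK : cancel hq hi. Proof. by move=> x; rewrite /hq /hi; field. Qed.
Let hiK : cancel hi hq. Proof. by move=> x; rewrite /hq /hi; field. Qed.

Let P_hq x : P (hq x) = w x / (C * Num.sqrt (1 - x ^+ 2)).
Proof. by rewrite /P /PofQ /= -/(hi (hq x)) hqK. Qed.

Let suppP : supp P = hq @` supp w.
Proof.
apply: (supp_image hqK hiK) => x; rewrite P_hq.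
have [->|wx] := eqVneq (w x) 0; first by rewrite mul0r eqxx.
by rewrite mulf_neq0 // invr_neq0 // mulf_neq0 // sq_ne0.
Qed.

Let sum_P (F : R -> R) : \sum_(p \in supp P) F p = \sum_(x \in supp w) F (hq x).
Proof. by rewrite suppP (sum_image _ _ hqK). Qed.

Let hq_s x : Num.sqrt (hq x * (1 - hq x)) = Num.sqrt (1 - x ^+ 2) / 2.
Proof.
by rewrite -sqrt_quarter; congr Num.sqrt; rewrite /hq; field.
Qed.

Let Prange p : P p != 0 -> 0 < p < 1.
Proof.
rewrite /P /PofQ /= => h.
have : w (2 * p - 1) != 0 by apply: contraNneq h => ->; rewrite mul0r.
by move/wr => /andP[a b]; apply/andP; split; lra.
Qed.

Let biasP : bias_dist P.
Proof.
split; first by rewrite suppP; exact: finite_image.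
split.
  move=> p; rewrite /P /PofQ /=.
  by rewrite divr_ge0 // mulr_ge0 ?sqrtr_ge0 // ltW.
split; first exact: Prange.
split.
  rewrite sum_P; under eq_fsbigr => x _ do rewrite P_hq invfM mulrCA.
  by rewrite -mulr_fsumr mulVf.
move=> a; rewrite /P /PofQ /=.
have -> : 2 * (1 - a) - 1 = - (2 * a - 1) by ring.
by rewrite wsym sqrrN.
Qed.

Let Ep0 l x : (0 < x < l)%N -> (l <= c)%N -> Ep P (fbias l x) = 0.
Proof.
move=> hx lc.
have xl : (x <= l)%N by case/andP: hx => _ /ltnW.
rewrite /Ep.
under eq_fsbigr => p hp do rewrite fbiasE ?Prange ?(set_mem hp) //.
rewrite sum_P.
have -> : \sum_(x0 \in supp w) P (hq x0) *
     (Num.sqrt (hq x0 * (1 - hq x0)) * ((Bp l x)^`()).[hq x0]) =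
   \sum_(x0 \in supp w) (2 * C)^-1 * (w x0 * (((Bp l x)^`()) \Po qp).[x0]).
  apply: eq_fsbigr => y /set_mem hy.
  rewrite P_hq hq_s horner_comp qpE -/(hq y).
  by field; rewrite C0 sq_ne0.
rewrite -mulr_fsumr quad; last by rewrite size_comp_qp (leq_trans (size_dBp R xl) lc).
rewrite -comp_polyA qp_rp comp_polyXr Uf_deriv.
by case: (Bp_end R hx) => -> ->; rewrite subrr !mulr0.
Qed.

Lemma dir1_indist : c_indist c P.
Proof.
split; first exact: biasP.
move=> l /andP[l2 lc]; rewrite big_nat big1 // => x /andP[x1 xl].
by rewrite /Rlx Ep0 ?x1 // maxxx mulr0.
Qed.

Lemma dir1_inv : QofP P = w.
Proof.
have C'E : \sum_(p \in supp P) Num.sqrt (p * (1 - p)) * P p / 2 = (2 * C)^-1.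
  rewrite sum_P.
  rewrite (eq_fsbigr (fun y => (4 * C)^-1 * w y)); last first.
    move=> y /set_mem hy; rewrite hq_s P_hq.
    by field; rewrite C0 sq_ne0.
  by rewrite -mulr_fsumr sumw; field.
apply/funext => x; rewrite /QofP /= C'E -/(hq x) hq_s P_hq.
have [->|wx] := eqVneq (w x) 0; first by rewrite !(mul0r, mulr0).
by field; rewrite C0 sq_ne0.
Qed.

End Dir1.


Section Dir2.
Variables (R : realType) (c : nat) (hc : (1 <= c)%N) (P : R -> R).
Hypothesis hP : c_indist c P.

Let fin : finite_set (supp P). Proof. by case: hP => [[h _] _]. Qed.
Let P0 x : 0 <= P x. Proof. by case: hP => [[_ [h _]] _]. Qed.
Let Prange x : P x != 0 -> 0 < x < 1. Proof. by case: hP => [[_ [_ [h _]]] _]; apply: h. Qed.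
Let sum1 : \sum_(x \in supp P) P x = 1. Proof. by case: hP => [[_ [_ [_ [h _]]]] _]. Qed.
Let Psym a : P (1 - a) = P a. Proof. by case: hP => [[_ [_ [_ [_ h]]]] _]. Qed.

Let Ep_le0 l x : (2 <= l <= c)%N -> (1 <= x < l)%N -> Ep P (fbias l x) <= 0.
Proof.
move=> hl hx; have /eqP := hP.2 l hl.
rewrite psumr_eq0; last by move=> i _; rewrite mulr_ge0 // le_max lexx.
move/allP => /(_ x); rewrite mem_index_iota hx => /(_ isT) /=.
rewrite mulf_eq0 pnatr_eq0 eqn0Ngt bin_gt0 ltnW /=; last by case/andP: hx.
by rewrite /Rlx => /eqP h; rewrite -h le_max lexx orbT.
Qed.

Let hs (p : R) := 1 - p.
Let hsK : cancel hs hs. Proof. by move=> x; rewrite /hs; ring. Qed.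

Let supp_sym : supp P = hs @` supp P.
Proof. by apply: (supp_image hsK hsK) => x; rewrite /hs Psym. Qed.

Let Ep_sym l x : (x <= l)%N -> Ep P (fbias l (l - x)) = - Ep P (fbias l x).
Proof.
move=> xl; rewrite /Ep {1}supp_sym (sum_image _ _ hsK) -mulN1r mulr_fsumr.
by apply: eq_fsbigr => p _; rewrite /hs Psym fbias_sym // mulrN mulN1r.
Qed.

Let Ep0 l x : (2 <= l <= c)%N -> (1 <= x < l)%N -> Ep P (fbias l x) = 0.
Proof.
move=> hl hx; apply/eqP; rewrite eq_le Ep_le0 //=.
have xl : (x <= l)%N by case/andP: hx => _ /ltnW.
rewrite -oppr_le0 -Ep_sym // Ep_le0 //.
case/andP: hx => h1 h2; apply/andP; split; first by rewrite subn_gt0.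
by rewrite ltn_subrL h1 (leq_trans _ h2).
Qed.


Let sP p : supp P p -> 0 < Num.sqrt (p * (1 - p)).
Proof.
move=> /Prange /andP[a b]; rewrite sqrtr_gt0 mulr_gt0 // subr_gt0 //.
Qed.

Let m k := \sum_(p \in supp P) P p * Num.sqrt (p * (1 - p)) * p ^+ k.

Let Ep_mu l x : (x <= l)%N ->
  Ep P (fbias l x) = \sum_(p \in supp P) P p * Num.sqrt (p * (1 - p)) * ((Bp l x)^`()).[p].
Proof.
move=> xl; apply: eq_fsbigr => p /set_mem hp.
by rewrite fbiasE ?Prange // mulrA.
Qed.

Let mrec a : (a.+2 <= c)%N -> a.+1%:R * m a = a.+2%:R * m a.+1.
Proof.
move=> ac; apply/eqP; rewrite -subr_eq0; apply/eqP.
have := @Ep0 a.+2 a.+1; rewrite ac ltnSn /= => /(_ isT isT).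
rewrite Ep_mu // => <-; rewrite /m !fsbig_finite //.
rewrite !mulr_sumr -sumrB; apply: eq_bigr => p _.
by rewrite dBp_special; ring.
Qed.

Let mom k : (k < c)%N -> m k = m 0 / k.+1%:R.
Proof.
elim: k => [|k IH] hk; first by rewrite divr1.
have := mrec k hk; rewrite IH ?(ltnW hk) // => h.
apply: (mulfI (x := k.+2%:R)); first by rewrite pnatr_eq0.
rewrite -h; field; by rewrite nat1r -natrD !pnatr_eq0.
Qed.

Let muU (G : {poly R}) : (size G <= c)%N ->
  \sum_(p \in supp P) P p * Num.sqrt (p * (1 - p)) * G.[p] = m 0 * Uf G.
Proof.
move=> hG; rewrite fsbig_finite //.
under eq_bigr do rewrite horner_coef mulr_sumr.
rewrite exchange_big /Uf mulr_sumr; apply: eq_bigr => i _.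
have hi : (i < c)%N by apply: (leq_trans (ltn_ord i) hG).
have := @mom i hi; rewrite /m fsbig_finite // => h.
transitivity (G`_i * \sum_(x <- finmap.enum_fset (fset_set (supp P))) P x * Num.sqrt (x * (1 - x)) * x ^+ i).
  by rewrite mulr_sumr; apply: eq_bigr => p _; ring.
by rewrite h; ring.
Qed.


Let m0pos : 0 < m 0.
Proof.
case: (pselect (exists2 p, supp P p & P p != 0)) => [[p hp Pp]|H]; last first.
  exfalso; move: sum1; rewrite fsbig1 => [/eqP|x hx]; first by rewrite eq_sym oner_eq0.
  by exfalso; apply: H; exists x.
apply: sum_pos => //.
  by move=> x hx; rewrite expr0 mulr1 mulr_ge0 ?sqrtr_ge0.
exists p => //; rewrite expr0 mulr1 mulr_gt0 ?sP //.
by rewrite lt_neqAle eq_sym Pp P0.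
Qed.

Let C' := \sum_(p \in supp P) Num.sqrt (p * (1 - p)) * P p / 2.
Let C'E : C' = m 0 / 2.
Proof.
rewrite /C' /m mulr_fsuml; apply: eq_fsbigr => p _; ring.
Qed.
Let C'pos : 0 < C'. Proof. by rewrite C'E divr_gt0. Qed.
Let C'0 : C' != 0. Proof. by rewrite gt_eqF. Qed.

Let Q := QofP P.
Let hq (x : R) := (1 + x) / 2.
Let hi (p : R) := 2 * p - 1.
Let hqK : cancel hq hi. Proof. by move=> x; rewrite /hq /hi; field. Qed.
Let hiK : cancel hi hq. Proof. by move=> x; rewrite /hq /hi; field. Qed.

Let QE x : Q x = Num.sqrt (hq x * (1 - hq x)) * P (hq x) / C'.
Proof. by []. Qed.

Let Q_hi p : Q (hi p) = Num.sqrt (p * (1 - p)) * P p / C'.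
Proof. by rewrite QE hiK. Qed.

Let suppQ : supp Q = hi @` supp P.
Proof.
apply: (supp_image hiK hqK) => x; rewrite Q_hi.
have [->|Px] := eqVneq (P x) 0; first by rewrite mulr0 mul0r eqxx.
by rewrite mulf_neq0 ?invr_neq0 // mulf_neq0 // gt_eqF // sP.
Qed.

Let sum_Q (F : R -> R) : \sum_(x \in supp Q) F x = \sum_(p \in supp P) F (hi p).
Proof. by rewrite suppQ (sum_image _ _ hiK). Qed.

Lemma dir2_QS : symQS c.-1 Q.
Proof.
split; last first.
  move=> xi; rewrite !QE (_ : hq (- xi) = 1 - hq xi); last by rewrite /hq; field.
  rewrite Psym; congr (Num.sqrt _ * _ / _); ring.
split; first by rewrite suppQ; exact: finite_image.
split.
  by move=> x; rewrite QE divr_ge0 ?mulr_ge0 ?sqrtr_ge0 // ltW.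
split.
  move=> x; rewrite QE => h.
  have : P (hq x) != 0 by apply: contraNneq h => ->; rewrite mulr0 mul0r.
  by move/Prange; rewrite /hq => /andP[a b]; apply/andP; split; lra.
move=> F; rewrite prednK // => hF.
rewrite -/(Iq F) I_U sum_Q; congr (_%:E).
rewrite (eq_fsbigr (fun p => C'^-1 * (P p * Num.sqrt (p * (1 - p)) * (F \Po rp).[p]))); last first.
  by move=> p _; rewrite Q_hi horner_comp rpE /hi; ring.
rewrite -mulr_fsumr muU ?size_comp_rp // C'E; field; by rewrite (gt_eqF m0pos).
Qed.

Lemma dir2_inv : PofQ Q = P.
Proof.
have sq4 p : Num.sqrt (1 - (hi p) ^+ 2) = 2 * Num.sqrt (p * (1 - p)).
  by rewrite -sqrt_four; congr Num.sqrt; rewrite /hi; ring.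
have CE : \sum_(xi \in supp Q) Q xi / Num.sqrt (1 - xi ^+ 2) = (2 * C')^-1.
  rewrite sum_Q (eq_fsbigr (fun p => (2 * C')^-1 * P p)); last first.
    move=> p /set_mem hp; rewrite Q_hi sq4; field.
    by rewrite C'0 gt_eqF ?sP.
  by rewrite -mulr_fsumr sum1 mulr1.
apply/funext => p; rewrite /PofQ /= CE -/(hi p) Q_hi sq4.
have [->|Pp] := eqVneq (P p) 0; first by rewrite mulr0 !mul0r.
by field; rewrite C'0 gt_eqF ?sP.
Qed.

End Dir2.


Unset Implicit Arguments.
Local Open Scope ring_scope.

Theorem theorem1 (R : realType) (c : nat) (hc : (1 <= c)%N) :
  (forall w : R -> R, symQS c.-1 w ->
     c_indist c (PofQ w) /\ QofP (PofQ w) = w) /\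
  (forall P : R -> R, c_indist c P ->
     symQS c.-1 (QofP P) /\ PofQ (QofP P) = P).
Proof.
split=> [w hw | P hP]; split.
- exact: (dir1_indist R c hc w hw).
- exact: (dir1_inv R c hc w hw).
- exact: (dir2_QS R c hc P hP).
- exact: (dir2_inv R c P hP).
Qed.
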